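(* Let Assumption 1 hold and let $\{\mathbf x_k\}$, $\{\rho_k\}$, $\{\Delta_k\}$ be generated by Algorithm MADS-PIP, with path-following index set $\mathcal K_\rho$. Then $\lim_{k\in\mathcal K_\rho}\Delta_k=0$.
   Context: Consider the problem of minimizing $f(\mathbf x)$ over $\mathbf x\in\mathbb R^n$ subject to $g_\ell(\mathbf x)\le 0$ ($\ell=1,\dots,m$) and $h_j(\mathbf x)=0$ ($j=1,\dots,p$), where $f,g_\ell,h_j:\mathbb R^n\to\mathbb R\cup\{+\infty\}$. The index set $\{1,\dots,m\}$ is partitioned into disjoint sets $\mathcal G^{int}$ and $\mathcal G^{ext}$, fixed throughout. Define $\Omega^{int}=\{\mathbf x: g_\ell(\mathbf x)\le 0\ \forall\ell\in\mathcal G^{int}\}$, $\Omega^{ext}=\{\mathbf x: g_\ell(\mathbf x)\le0\ \forall \ell\in\mathcal G^{ext},\ h_j(\mathbf x)=0\ \forall j\}$, $\Omega=\Omega^{int}\cap\Omega^{ext}$. Let $\phi^{prox}(\mathbf x)=\max_{\ell\in\mathcal G^{int}}g_\ell(\mathbf x)$; let $c^{int}(\mathbf x)=-\prod_{\ell\in\mathcal G^{int}}\min\{1,-g_\ell(\mathbf x)\}$ if $g_\ell(\mathbf x)\le0$ for all $\ell\in\mathcal G^{int}$, and $c^{int}(\mathbf x)=\phi^{prox}(\mathbf x)$ otherwise; let $c^{ext}(\mathbf x)=\sum_{\ell\in\mathcal G^{ext}}(\max\{0,g_\ell(\mathbf x)\})^2+\sum_{j=1}^p h_j(\mathbf x)^2$.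 (If $\mathcal G^{int}=\emptyset$, then $c^{int}\equiv-1$ and $[\phi^{prox}]^2$ is read as $+\infty$.) For $\rho>0$ the merit function is $z(\mathbf x;\rho)=f(\mathbf x)-\rho\log(-c^{int}(\mathbf x))+\frac1\rho c^{ext}(\mathbf x)$ if $c^{int}(\mathbf x)<0$, and $z(\mathbf x;\rho)=+\infty$ otherwise. Algorithm MADS-PIP: inputs $\mathbf x_0$ with $g_\ell(\mathbf x_0)<0$ for all $\ell\in\mathcal G^{int}$ and $z(\mathbf x_0;\rho_0)<+\infty$, $\rho_0>0$, $\theta_\rho\in(0,1)$, $\Delta_0>0$, $\theta_\Delta\in(0,1)\cap\mathbb Q$, $\beta>1$. For $k=0,1,2,\dots$ (the algorithm never stops): mesh $\mathcal M_k=\{\mathbf x_k+\delta_k\mathbf u:\mathbf u\in\mathbb Z^n\}$ with $\delta_k=\min\{\Delta_k,\Delta_k^2/\Delta_0\}$; frame $\mathcal F_k=\{\mathbf x\in\mathcal M_k:\|\mathbf x-\mathbf x_k\|\le\Delta_k\}$. Search: a finite (possibly empty) set $\mathcal S_k\subset\mathcal M_k$ is examined; if some $\mathbf s\in\mathcal S_k$ satisfies $z(\mathbf s;\rho_k)<z(\mathbf x_k;\rho_k)$, set $\mathbf x_{k+1}=\mathbf s$, $\Delta_{k+1}=\Delta_k/\theta_\Delta$, $\rho_{k+1}=\rho_k$ (successful iteration). Otherwise poll: choose a finite set $\mathcal D_k$ of nonzero directions with $\mathbf x_k+\mathbf d\in\mathcal F_k$ for all $\mathbf d\in\mathcal D_k$;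 if some $\mathbf d\in\mathcal D_k$ satisfies $z(\mathbf x_k+\mathbf d;\rho_k)<z(\mathbf x_k;\rho_k)$, set $\mathbf x_{k+1}=\mathbf x_k+\mathbf d$, $\Delta_{k+1}=\Delta_k/\theta_\Delta$, $\rho_{k+1}=\rho_k$ (successful). Otherwise the iteration is unsuccessful: $\mathbf x_{k+1}=\mathbf x_k$, $\Delta_{k+1}=\theta_\Delta\Delta_k$, and $\rho_{k+1}=\theta_\rho\rho_k$ if $\Delta_{k+1}\le\min\{\rho_k^\beta,[\phi^{prox}(\mathbf x_k)]^2\}$, else $\rho_{k+1}=\rho_k$. The path-following index set is $\mathcal K_\rho=\{k:\rho_{k+1}<\rho_k\}$ and $\{\mathbf x_k\}_{k\in\mathcal K_\rho}$ is the path-following subsequence. A point $\bar{\mathbf x}$ is an end-path point if there is an infinite $\mathcal K_\rho^{x}\subseteq\mathcal K_\rho$ with $\lim_{k\in\mathcal K_\rho^x}\mathbf x_k=\bar{\mathbf x}$; $\{\mathbf x_k\}_{k\in\mathcal K^x_\rho}$ is then an end-path subsequence. Assumption 1: for every $\alpha\in\mathbb R$ the level set $\{\mathbf x\in\mathbb R^n: f(\mathbf x)\le\alpha\}$ is bounded. *)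

(* Defs.v *)
From HB Require Import structures.
From mathcomp Require Import all_boot all_order all_algebra.
From mathcomp Require Import all_classical all_reals.
From mathcomp Require Import exp.
Set Implicit Arguments. Unset Strict Implicit. Unset Printing Implicit Defensive.
Import Order.TTheory GRing.Theory Num.Theory.
Local Open Scope ring_scope.

Section MadsPip.
Variables (R : realType) (n m p : nat).
Implicit Types (x y s d : 'rV[R]_n).

Definition enorm x : R := Num.sqrt (\sum_(i < n) x ord0 i ^+ 2).

Variables (f : 'rV[R]_n -> \bar R) (g : 'I_m -> 'rV[R]_n -> \bar R)
          (h : 'I_p -> 'rV[R]_n -> \bar R) (Gint : {set 'I_m}).
(* G^ext is the complement ~: Gint of Gint in {1,...,m}. *)

Definition phi_prox x : \bar R := \big[Order.max/-oo%E]_(l in Gint) g l x.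

(* [phi^prox(x)]^2, read as +oo when G^int is empty *)
Definition phi_prox_sq x : \bar R :=
  if Gint == finset.set0 then +oo%E else (phi_prox x * phi_prox x)%E.

Definition c_int x : \bar R :=
  if [forall l in Gint, (g l x <= 0)%E]
  then (- \prod_(l in Gint) Order.min 1%E (- g l x))%E
  else phi_prox x.

Definition c_ext x : \bar R :=
  (\sum_(l in ~: Gint) (Order.max 0%E (g l x) * Order.max 0%E (g l x))
   + \sum_(j < p) (h j x * h j x))%E.

Definition zmerit (rho : R) x : \bar R :=
  if (c_int x < 0)%E
  then (f x - (rho * ln (- fine (c_int x)))%:E + (rho^-1)%:E * c_ext x)%E
  else +oo%E.

Definition on_mesh (xk : 'rV[R]_n) (delta : R) s : Prop :=
  exists u : 'rV[int]_n, s = xk + delta *: map_mx (fun z : int => z%:~R) u.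

Definition on_frame (xk : 'rV[R]_n) (delta Delta : R) s : Prop :=
  on_mesh xk delta s /\ enorm (s - xk) <= Delta.

Definition mesh_size (Delta Delta0 : R) : R := Order.min Delta (Delta ^+ 2 / Delta0).

Definition mads_pip_inputs (x0 : 'rV[R]_n) (rho0 theta_rho Delta0 theta_Delta beta : R)
  : Prop :=
  [/\ (forall l, l \in Gint -> (g l x0 < 0)%E),
      (zmerit rho0 x0 < +oo)%E,
      0 < rho0, 0 < theta_rho < 1 &
      [/\ 0 < Delta0, 0 < theta_Delta < 1,
          (exists q : rat, theta_Delta = ratr q) & 1 < beta]].

(* One iteration k of MADS-PIP (search set S_k and poll set D_k are
   chosen arbitrarily, subject to the algorithm's requirements). *)
Definition mads_pip_step (Delta0 theta_rho theta_Delta beta : R)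
  (x : nat -> 'rV[R]_n) (rho Delta : nat -> R) (k : nat) : Prop :=
  let zk := zmerit (rho k) in
  let dk := mesh_size (Delta k) Delta0 in
  let success y :=
    [/\ x k.+1 = y, Delta k.+1 = Delta k / theta_Delta & rho k.+1 = rho k] in
  exists S : seq 'rV[R]_n,
    (forall s, s \in S -> on_mesh (x k) dk s) /\
    ( (* successful search *)
      (exists s, [/\ s \in S, (zk s < zk (x k))%E & success s])
    \/ ((forall s, s \in S -> ~ (zk s < zk (x k))%E) /\
        exists D : seq 'rV[R]_n,
          (forall d, d \in D -> d != 0 /\ on_frame (x k) dk (Delta k) (x k + d)) /\
          ( (* successful poll *)
            (exists d, [/\ d \in D, (zk (x k + d)%R < zk (x k))%E & success (x k + d)])
          \/ (* unsuccessful iteration *)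
            [/\ (forall d, d \in D -> ~ (zk (x k + d)%R < zk (x k))%E),
                x k.+1 = x k,
                Delta k.+1 = theta_Delta * Delta k &
                rho k.+1 = if ((Delta k.+1)%:E <=
                               Order.min ((rho k `^ beta)%:E) (phi_prox_sq (x k)))%E
                           then theta_rho * rho k else rho k]))).

Definition mads_pip_run (x0 : 'rV[R]_n) (rho0 theta_rho Delta0 theta_Delta beta : R)
  (x : nat -> 'rV[R]_n) (rho Delta : nat -> R) : Prop :=
  [/\ x 0%N = x0, rho 0%N = rho0, Delta 0%N = Delta0 &
      forall k, mads_pip_step Delta0 theta_rho theta_Delta beta x rho Delta k].

Definition assumption1 : Prop :=
  forall alpha : R, exists M : R, forall y, (f y <= alpha%:E)%E -> enorm y <= M.

End MadsPip.

(* Main.v *)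
Require Import Defs.
From HB Require Import structures.
From mathcomp Require Import all_boot all_order all_algebra.
From mathcomp Require Import all_classical all_reals.
From mathcomp Require Import exp.
From mathcomp Require Import all_analysis.
Import Order.TTheory GRing.Theory Num.Theory.
Import numFieldNormedType.Exports.
Local Open Scope ring_scope.

Lemma geo (R : realType) (t c : R) : 0 <= t < 1 -> 0 < c -> exists j : nat, t ^+ j < c.
Proof.
move=> /andP[t0 t1] c0.
have h : `|t| < 1 by rewrite ger0_norm.
have := @cvgr0_norm_lt _ _ _ _ _ (GRing.exp t : R^nat) (cvg_expr h) c c0.
move=> [N _ HN]. exists N. have := HN N (leqnn N) => /=.
by rewrite ger0_norm // exprn_ge0.
Qed.

Lemma step_facts (R : realType) (n m p : nat)
  (f : 'rV[R]_n -> \bar R) (g : 'I_m -> 'rV[R]_n -> \bar R)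
  (h : 'I_p -> 'rV[R]_n -> \bar R) (Gint : {set 'I_m})
  (Delta0 theta_rho theta_Delta beta : R)
  (x : nat -> 'rV[R]_n) (rho Delta : nat -> R) k :
  mads_pip_step f g h Gint Delta0 theta_rho theta_Delta beta x rho Delta k ->
  [/\ (rho k.+1 = rho k \/ rho k.+1 = theta_rho * rho k),
      (Delta k.+1 = Delta k / theta_Delta \/ Delta k.+1 = theta_Delta * Delta k) &
      (rho k.+1 <> rho k -> [/\ Delta k.+1 = theta_Delta * Delta k,
          Delta k.+1 <= rho k `^ beta & rho k.+1 = theta_rho * rho k])].
Proof.
move=> [S [_ [[s [_ _ [_ -> ->]]]|[_ [D [_ [[d [_ _ [_ -> ->]]]|[_ _ HD Hr]]]]]]]].
- by split; [left|left|].
- by split; [left|left|].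
rewrite Hr; case: ifP => Hc.
  split; [right|right|] => //.
  move=> _; split => //.
  move: Hc; rewrite le_min => /andP[+ _]; by rewrite lee_fin.
by split; [left|right|].
Qed.

Arguments step_facts {R n m p f g h Gint Delta0 theta_rho theta_Delta beta x rho Delta k}.

Theorem mainTheorem2 (R : realType) (n m p : nat)
  (f : 'rV[R]_n -> \bar R) (g : 'I_m -> 'rV[R]_n -> \bar R)
  (h : 'I_p -> 'rV[R]_n -> \bar R) (Gint : {set 'I_m})
  (x0 : 'rV[R]_n) (rho0 theta_rho Delta0 theta_Delta beta : R)
  (x : nat -> 'rV[R]_n) (rho Delta : nat -> R) :
  (forall y, f y != -oo%E) ->
  (forall l y, g l y != -oo%E) ->
  (forall j y, h j y != -oo%E) ->
  assumption1 f ->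
  mads_pip_inputs f g h Gint x0 rho0 theta_rho Delta0 theta_Delta beta ->
  mads_pip_run f g h Gint x0 rho0 theta_rho Delta0 theta_Delta beta x rho Delta ->
  (* lim_{k in K_rho} Delta_k = 0, where K_rho = {k | rho_{k+1} < rho_k} *)
  forall eps : R, 0 < eps ->
    exists N : nat, forall k : nat, (N <= k)%N -> rho k.+1 < rho k ->
      `|Delta k| < eps.
Proof.
move=> _ _ _ _ [_ _ r0 /andP[tr0 tr1] [D0 /andP[tD0 tD1] _ b1]] [_ Hr0 HD0 Hstep].
move=> eps eps0.
have Rpos : forall k, 0 < rho k.
  elim=> [|k IH]; first by rewrite Hr0.
  by have [[->|->] _ _] := step_facts (Hstep k) => //; rewrite mulr_gt0.
have Dpos : forall k, 0 < Delta k.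
  elim=> [|k IH]; first by rewrite HD0.
  have [_ [->|->] _] := step_facts (Hstep k); [exact: divr_gt0|exact: mulr_gt0].
have Rdec : forall k, rho k.+1 <= rho k.
  move=> k; have [[->|->] _ _] := step_facts (Hstep k) => //.
  by rewrite ger_pMl ?Rpos // ltW.
have Rmono : forall i j, (i <= j)%N -> rho j <= rho i.
  move=> i j /subnK <-; elim: (j - i)%N => [|d IH] //.
  by rewrite addSn (le_trans (Rdec _)).
have NE : forall k, rho k.+1 < rho k -> rho k.+1 <> rho k.
  by move=> k Hk e; move: Hk; rewrite e ltxx.
have Key : forall k, rho k.+1 < rho k -> Delta k <= rho k `^ beta / theta_Delta.
  move=> k Hk; have [_ _ /(_ (NE _ Hk))[HD Hb _]] := step_facts (Hstep k).
  by rewrite ler_pdivlMr // mulrC -HD.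
case: (pselect (exists N, forall k, (N <= k)%N -> ~ (rho k.+1 < rho k))).
  by move=> [N HN]; exists N => k /HN.
move=> Hinf.
have Hinf' : forall N, exists k, (N <= k)%N /\ rho k.+1 < rho k.
  move=> N; apply: contrapT => HN; apply: Hinf; exists N => k Nk Hk.
  by apply: HN; exists k.
have Geo : forall j : nat, exists N, rho N <= rho0 * theta_rho ^+ j.
  elim=> [|j [N HN]]; first by exists 0%N; rewrite Hr0 expr0 mulr1.
  have [k [Nk Hk]] := Hinf' N.
  exists k.+1; have [_ _ /(_ (NE _ Hk))[_ _ ->]] := step_facts (Hstep k).
  rewrite exprS mulrCA ler_pM2l //.
  exact: le_trans (Rmono _ _ Nk) HN.
pose c := Order.min 1 (eps * theta_Delta).
have c0 : 0 < c by rewrite lt_min ltr01 mulr_gt0.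
have trr : 0 <= theta_rho < 1 by rewrite (ltW tr0) tr1.
have [j Hj] := @geo R theta_rho (c / rho0) trr (divr_gt0 c0 r0).
have [N HN] := Geo j.
exists N => k Nk Hk.
have rk : rho k < c.
  apply: (le_lt_trans (Rmono _ _ Nk)); apply: (le_lt_trans HN).
  by rewrite mulrC -ltr_pdivlMr.
have c1 : c <= 1 by rewrite /c ge_min lexx.
have c2 : c <= eps * theta_Delta by rewrite /c ge_min lexx orbT.
rewrite gtr0_norm ?Dpos //; apply: le_lt_trans (Key k Hk) _.
rewrite ltr_pdivrMr //.
have rk1 : 0 < rho k <= 1 by rewrite Rpos /= ltW // (lt_le_trans rk c1).
apply: le_lt_trans (ge1r_powR rk1 (ltW b1)) _.
exact: lt_le_trans rk c2.
Qed.
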